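(* For weighted formulas, the proof system consisting of Axiom (A), Rules (R1)–(R5), and Rule (R6w) (in place of (R6)) is sound and complete: for every finite set $\Gamma$ of sentences and every sentence $\gamma$ (with weighted formulas as components), $\Gamma\vdash\gamma$ if and only if $\Gamma\models\gamma$.
   Context: Weighted setting. Fix a finite set of atomic propositions, finite sets of binary and unary connectives; each binary $\alpha$ has an arbitrary function $f_\alpha:[0,1]^2\times\mathbb R^2\to[0,1]$ and each unary $\rho$ an arbitrary $f_\rho:[0,1]\times\mathbb R\to[0,1]$. Weighted formulas: atoms are formulas; if $\sigma_1,\sigma_2,\sigma$ are formulas and $w_1,w_2,w\in\mathbb R$ are weights, then $(\sigma_1\,\alpha\,\sigma_2,w_1,w_2)$ and $(\rho\sigma,w)$ are formulas; their subformulas are $\sigma_1,\sigma_2$ resp. $\sigma$. A model assigns values in $[0,1]$ to atoms; the value of $(\sigma_1\,\alpha\,\sigma_2,w_1,w_2)$ is $f_\alpha(s_1,s_2,w_1,w_2)$ and of $(\rho\sigma,w)$ is $f_\rho(s,w)$, where $s_1,s_2,s$ are the values of $\sigma_1,\sigma_2,\sigma$. A sentence $(\sigma_1,\ldots,\sigma_k,S)$ has pairwise distinct formulas and $S\subseteq[0,1]^k$; $M$ satisfies it iff the tuple of values of the $\sigma_i$ lies in $S$. $\Gamma\models\gamma$: every model of all of $\Gamma$ is a model of $\gamma$; $\Gamma\vdash\gamma$: $\gamma$ derivable from $\Gamma$ by: (A) $(\sigma,[0,1])$ for every formula $\sigma$. (R1) For a permutation $\pi$: from $(\sigma_1,\ldots,\sigma_k,S)$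 infer $(\sigma_{\pi(1)},\ldots,\sigma_{\pi(k)},\{(s_{\pi(1)},\ldots,s_{\pi(k)}):(s_1,\ldots,s_k)\in S\})$. (R2) From $(\sigma_1,\ldots,\sigma_k,S)$ infer $(\sigma_1,\ldots,\sigma_m,S\times[0,1]^{m-k})$ (components kept distinct). (R3) From $(\sigma_1,\ldots,\sigma_k,S_1)$ and $(\sigma_1,\ldots,\sigma_k,S_2)$ infer $(\sigma_1,\ldots,\sigma_k,S_1\cap S_2)$. (R4) For $0<r<k$: from $(\sigma_1,\ldots,\sigma_k,S)$ infer $(\sigma_1,\ldots,\sigma_{k-r},\{(s_1,\ldots,s_{k-r}):(s_1,\ldots,s_k)\in S\})$. (R5) From $(\sigma_1,\ldots,\sigma_k,S)$ infer $(\sigma_1,\ldots,\sigma_k,S')$ whenever $S\subseteq S'\subseteq[0,1]^k$. (R6w) From $(\sigma_1,\ldots,\sigma_k,S)$ infer $(\sigma_1,\ldots,\sigma_k,S')$, where $S'$ is the set of $(s_1,\ldots,s_k)\in S$ such that $f_\alpha(s_i,s_j,w_1,w_2)=s_m$ whenever $\sigma_m$ is $(\sigma_i\,\alpha\,\sigma_j,w_1,w_2)$, and $f_\rho(s_i,w)=s_j$ whenever $\sigma_j$ is $(\rho\sigma_i,w)$. *)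

(* Defs.v *)
From Stdlib Require Import Reals List Permutation FinFun.
Import ListNotations.
Open Scope R_scope.

Section Weighted.

Variables (A B U : Type).
(* f_alpha : [0,1]^2 x R^2 -> [0,1], f_rho : [0,1] x R -> [0,1];
   modelled as total functions on R, the range condition on [0,1]
   inputs is a hypothesis of the theorem. *)
Variable fb : B -> R -> R -> R -> R -> R.
Variable fu : U -> R -> R -> R.

Inductive formula : Type :=
  | Atom : A -> formula
  | Bin : B -> formula -> formula -> R -> R -> formula
  | Un : U -> formula -> R -> formula.

Definition unit01 (x : R) : Prop := 0 <= x <= 1.

(* a sentence (sigma_1,...,sigma_k, S); tuples are lists of length k *)
Record sentence : Type := Sent { sforms : list formula; sset : list R -> Prop }.

Definition cube (k : nat) (v : list R) : Prop :=
  length v = k /\ Forall unit01 v.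

Definition wf_sentence (s : sentence) : Prop :=
  sforms s <> [] /\ NoDup (sforms s) /\
  (forall v, sset s v -> cube (length (sforms s)) v).

Definition model := A -> R.
Definition is_model (M : model) : Prop := forall a, unit01 (M a).

Fixpoint value (M : model) (f : formula) : R :=
  match f with
  | Atom a => M a
  | Bin b f1 f2 w1 w2 => fb b (value M f1) (value M f2) w1 w2
  | Un u f1 w => fu u (value M f1) w
  end.

Definition satisfies (M : model) (s : sentence) : Prop :=
  sset s (map (value M) (sforms s)).

Definition entails (Gamma : list sentence) (g : sentence) : Prop :=
  forall M : model, is_model M ->
    (forall s, In s Gamma -> satisfies M s) -> satisfies M g.

(* the R6w condition on a tuple v of values for the formula list l:
   f_alpha(s_i,s_j,w1,w2) = s_m whenever sigma_m is (sigma_i alpha sigma_j, w1, w2),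
   f_rho(s_i,w) = s_j whenever sigma_j is (rho sigma_i, w) *)
Definition r6w_ok (l : list formula) (v : list R) : Prop :=
  (forall (i j m : nat) b w1 w2 si sj xi xj xm,
     nth_error l i = Some si -> nth_error l j = Some sj ->
     nth_error l m = Some (Bin b si sj w1 w2) ->
     nth_error v i = Some xi -> nth_error v j = Some xj -> nth_error v m = Some xm ->
     fb b xi xj w1 w2 = xm) /\
  (forall (i j : nat) u w si xi xj,
     nth_error l i = Some si -> nth_error l j = Some (Un u si w) ->
     nth_error v i = Some xi -> nth_error v j = Some xj ->
     fu u xi w = xj).

(* reordering a list along an index list p (a permutation of 0..k-1):
   reorder p l l' means l' = (l_{p(0)}, ..., l_{p(k-1)}) *)
Definition reorder {T : Type} (p : list nat) (l l' : list T) : Prop :=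
  map (nth_error l) p = map Some l'.

Inductive derives (Gamma : list sentence) : sentence -> Prop :=
  | D_hyp : forall s, In s Gamma -> derives Gamma s
  | D_ax : forall sg, derives Gamma (Sent [sg] (cube 1))
  | D_perm : forall l S p l',
      derives Gamma (Sent l S) ->
      Permutation p (seq 0 (length l)) -> reorder p l l' ->
      derives Gamma (Sent l' (fun v' => exists v, S v /\ reorder p v v'))
  | D_ext : forall l S l2,
      derives Gamma (Sent l S) -> NoDup (l ++ l2) ->
      derives Gamma (Sent (l ++ l2)
        (fun u => exists v w, u = v ++ w /\ S v /\ cube (length l2) w))
  | D_inter : forall l S1 S2,
      derives Gamma (Sent l S1) -> derives Gamma (Sent l S2) ->
      derives Gamma (Sent l (fun v => S1 v /\ S2 v))
  (* (R4), with k = length (l ++ l2), r = length l2, 0 < r < k *)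
  | D_proj : forall l l2 S,
      derives Gamma (Sent (l ++ l2) S) -> l <> [] -> l2 <> [] ->
      derives Gamma (Sent l (fun v => exists u, S u /\ v = firstn (length l) u))
  | D_weak : forall l (S S' : list R -> Prop),
      derives Gamma (Sent l S) ->
      (forall v, S v -> S' v) -> (forall v, S' v -> cube (length l) v) ->
      derives Gamma (Sent l S')
  | D_r6w : forall l S,
      derives Gamma (Sent l S) ->
      derives Gamma (Sent l (fun v => S v /\ r6w_ok l v)).

End Weighted.

Arguments wf_sentence {A B U} s.
Arguments derives {A B U} fb fu Gamma _.
Arguments entails {A B U} fb fu Gamma g.
Arguments Sent {A B U} sforms sset.

(* Main.v *)
Require Import Defs.
From Stdlib Require Import Reals List FinFun.
From Stdlib Require Import Permutation Lia Lra Classical ClassicalEpsilon.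
Import ListNotations.
Open Scope R_scope.

Fixpoint idx {T : Type} (x : T) (l : list T) : nat :=
  match l with
  | [] => 0%nat
  | y :: l' => if excluded_middle_informative (x = y) then 0%nat else S (idx x l')
  end.

Lemma idx_lt {T} (x : T) l : In x l -> (idx x l < length l)%nat.
Proof.
  induction l as [|a l IH]; simpl; [tauto|].
  intros H; destruct (excluded_middle_informative (x = a)); [lia|].
  destruct H as [H|H]; [congruence|]. specialize (IH H); lia.
Qed.

Lemma idx_nth_error {T} (x : T) l : In x l -> nth_error l (idx x l) = Some x.
Proof.
  induction l as [|a l IH]; simpl; [tauto|].
  intros H; destruct (excluded_middle_informative (x = a)); [subst; reflexivity|].
  destruct H as [H|H]; [congruence|]. simpl; auto.
Qed.

Lemma idx_nth_error_inv {T} (x : T) l n : NoDup l -> nth_error l n = Some x -> idx x l = n.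
Proof.
  revert n; induction l as [|a l IH]; intros n Hnd H; [destruct n; discriminate|].
  inversion Hnd; subst. destruct n as [|n]; simpl in *.
  - inversion H; subst. destruct (excluded_middle_informative (x = x)); congruence.
  - destruct (excluded_middle_informative (x = a)).
    + subst. exfalso. apply H2. eapply nth_error_In; eauto.
    + f_equal; auto.
Qed.

Lemma idx_app {T} (x : T) l1 l2 : In x l1 -> idx x (l1 ++ l2) = idx x l1.
Proof.
  induction l1 as [|a l IH]; simpl; [tauto|].
  intros H; destruct (excluded_middle_informative (x = a)); [reflexivity|].
  destruct H as [H|H]; [congruence|]. f_equal; auto.
Qed.

Definition proj {T : Type} (l L : list T) (v : list R) : list R :=
  map (fun f => nth (idx f l) v 0) L.

Lemma proj_id {T} (l : list T) v : NoDup l -> length v = length l -> proj l l v = v.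
Proof.
  intros Hnd Hlen. apply nth_error_ext; intro n. unfold proj.
  rewrite nth_error_map. destruct (nth_error l n) eqn:E; simpl.
  - rewrite (idx_nth_error_inv _ _ _ Hnd E). symmetry; apply nth_error_nth'.
    rewrite Hlen. apply nth_error_Some. congruence.
  - symmetry. apply nth_error_None. apply nth_error_None in E. lia.
Qed.

Lemma nth_proj {T} (l L : list T) v f : In f L ->
  nth (idx f L) (proj l L v) 0 = nth (idx f l) v 0.
Proof.
  intro H. unfold proj. apply nth_error_nth. rewrite nth_error_map.
  rewrite idx_nth_error by auto. reflexivity.
Qed.

Lemma proj_proj {T} (L1 L2 L3 : list T) v : incl L3 L1 ->
  proj L1 L3 (proj L2 L1 v) = proj L2 L3 v.
Proof.
  intros H. unfold proj at 1 3. apply map_ext_in. intros f Hf.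
  apply nth_proj; auto.
Qed.

Lemma length_proj {T} (l L : list T) v : length (proj l L v) = length L.
Proof. unfold proj; apply length_map. Qed.

Lemma map_Some_inj {T} (a b : list T) : map Some a = map Some b -> a = b.
Proof.
  revert b; induction a; destruct b; simpl; intros H; try discriminate; auto.
  inversion H; f_equal; auto.
Qed.

Lemma reorder_proj {T} (l L : list T) v v' : incl L l -> length v = length l ->
  reorder (map (fun f => idx f l) L) v v' -> v' = proj l L v.
Proof.
  unfold reorder; intros Hi Hl H. rewrite map_map in H.
  apply map_Some_inj. rewrite <- H. unfold proj. rewrite map_map.
  apply map_ext_in. intros f Hf. apply nth_error_nth'.
  rewrite Hl. apply idx_lt; auto.
Qed.

Lemma reorder_self {T} (l L : list T) : incl L l ->
  reorder (map (fun f => idx f l) L) l L.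
Proof.
  unfold reorder; intros Hi. rewrite map_map. apply map_ext_in.
  intros f Hf. apply idx_nth_error; auto.
Qed.

Lemma perm_idx {T} (l L : list T) : NoDup l -> NoDup L -> (forall x, In x l <-> In x L) ->
  Permutation (map (fun f => idx f l) L) (seq 0 (length l)).
Proof.
  intros Hl HL Hx. apply NoDup_Permutation.
  - apply Injective_map_NoDup_in; auto. intros x y Hxy Hyy E.
    assert (Ex := idx_nth_error x l (proj2 (Hx x) Hxy)).
    assert (Ey := idx_nth_error y l (proj2 (Hx y) Hyy)). congruence.
  - apply seq_NoDup.
  - intro n. rewrite in_map_iff, in_seq. split.
    + intros [f [<- Hf]]. split; [lia|]. simpl. apply idx_lt, Hx; auto.
    + intros [_ Hn]. simpl in Hn. destruct (nth_error l n) as [f|] eqn:E.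
      * exists f; split. apply idx_nth_error_inv; auto. apply Hx. eapply nth_error_In; eauto.
      * apply nth_error_None in E; lia.
Qed.

Lemma value_unit {A B U : Type} (fb : B -> R -> R -> R -> R -> R) (fu : U -> R -> R -> R)
  (Hfb : forall (b:B) s1 s2 w1 w2, unit01 s1 -> unit01 s2 -> unit01 (fb b s1 s2 w1 w2))
  (Hfu : forall (u:U) s w, unit01 s -> unit01 (fu u s w)) (M : model A) :
  is_model A M -> forall f, unit01 (value A B U fb fu M f).
Proof. intros HM f; induction f; simpl; auto. Qed.

Lemma forall_map_unit {A B U : Type} (fb : B -> R -> R -> R -> R -> R) (fu : U -> R -> R -> R)
  (Hfb : forall (b:B) s1 s2 w1 w2, unit01 s1 -> unit01 s2 -> unit01 (fb b s1 s2 w1 w2))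
  (Hfu : forall (u:U) s w, unit01 s -> unit01 (fu u s w)) (M : model A) (HM : is_model A M) l :
  Forall unit01 (map (value A B U fb fu M) l).
Proof. apply Forall_forall; intros x Hx. apply in_map_iff in Hx as [f [<- _]].
  apply (value_unit fb fu Hfb Hfu); auto. Qed.

Lemma soundness {A B U : Type} (fb : B -> R -> R -> R -> R -> R) (fu : U -> R -> R -> R)
  (Hfb : forall (b:B) s1 s2 w1 w2, unit01 s1 -> unit01 s2 -> unit01 (fb b s1 s2 w1 w2))
  (Hfu : forall (u:U) s w, unit01 s -> unit01 (fu u s w)) (Gamma : list (sentence A B U)) g :
  derives fb fu Gamma g -> entails fb fu Gamma g.
Proof.
  intros D M HM HG. induction D; unfold satisfies in *; simpl in *.
  - auto.
  - split; [reflexivity|]. constructor; [|constructor]. apply (value_unit fb fu Hfb Hfu); auto.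
  - exists (map (value A B U fb fu M) l). split; auto.
    unfold reorder in *.
    transitivity (map (option_map (value A B U fb fu M)) (map (nth_error l) p)).
    { rewrite map_map. apply map_ext. intros; apply nth_error_map. }
    rewrite H0. rewrite !map_map. reflexivity.
  - exists (map (value A B U fb fu M) l), (map (value A B U fb fu M) l2).
    rewrite map_app. repeat split; auto. apply length_map.
    apply (forall_map_unit fb fu Hfb Hfu); auto.
  - auto.
  - exists (map (value A B U fb fu M) (l ++ l2)). split; auto.
    rewrite map_app, firstn_app, length_map, Nat.sub_diag, firstn_O, app_nil_r.
    rewrite firstn_all2; auto. rewrite length_map; lia.
  - auto.
  - split; auto. split.
    + intros i j m b w1 w2 si sj xi xj xm Hi Hj Hm Hxi Hxj Hxm.
      rewrite nth_error_map in Hxi, Hxj, Hxm. rewrite Hi in Hxi; rewrite Hj in Hxj; rewrite Hm in Hxm.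
      simpl in *. inversion Hxi; inversion Hxj; inversion Hxm; subst; reflexivity.
    + intros i j u w si xi xj Hi Hj Hxi Hxj.
      rewrite nth_error_map in Hxi, Hxj. rewrite Hi in Hxi; rewrite Hj in Hxj.
      simpl in *. inversion Hxi; inversion Hxj; subst; reflexivity.
Qed.

Lemma nth_unit (u : list R) i : Forall unit01 u -> unit01 (nth i u 0).
Proof.
  intros H. destruct (Nat.lt_ge_cases i (length u)).
  - rewrite Forall_forall in H; apply H, nth_In; auto.
  - rewrite nth_overflow by auto. unfold unit01; lra.
Qed.

Lemma proj_unit {T} (l L : list T) u : Forall unit01 u -> Forall unit01 (proj l L u).
Proof.
  intros H. unfold proj. apply Forall_forall; intros x Hx.
  apply in_map_iff in Hx as [f [<- _]]. apply nth_unit; auto.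
Qed.

Lemma cube_proj {T} (l L : list T) u : Forall unit01 u -> cube (length L) (proj l L u).
Proof. split; [apply length_proj | apply proj_unit; auto]. Qed.

Lemma firstn_app_exact {T} (a b : list T) : firstn (length a) (a ++ b) = a.
Proof. induction a; simpl; f_equal; auto. Qed.

Section Compl.
Variables (A B U : Type) (fb : B -> R -> R -> R -> R -> R) (fu : U -> R -> R -> R).
Variable Gamma : list (sentence A B U).
Notation form := (formula A B U).
Notation der := (derives fb fu Gamma).

Definition notin (ls : list form) (f : form) : bool :=
  if excluded_middle_informative (In f ls) then false else true.

Lemma notin_spec ls f : notin ls f = true <-> ~ In f ls.
Proof. unfold notin; destruct (excluded_middle_informative (In f ls)); split; intuition congruence. Qed.

Lemma nodup_split (ls L : list form) : NoDup ls -> NoDup L -> incl ls L ->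
  NoDup (ls ++ filter (notin ls) L) /\ (forall x, In x (ls ++ filter (notin ls) L) <-> In x L).
Proof.
  intros H1 H2 H3. split.
  - apply NoDup_app; auto. apply NoDup_filter; auto.
    intros a Ha Hb. apply filter_In in Hb as [_ Hb]. apply notin_spec in Hb; auto.
  - intros x. rewrite in_app_iff, filter_In, notin_spec. split.
    + intros [H|[H _]]; auto.
    + intros H. destruct (classic (In x ls)); auto.
Qed.

Lemma extend_sent (ls : list form) S L :
  wf_sentence (Sent ls S) -> der (Sent ls S) -> incl ls L -> NoDup L ->
  der (Sent L (fun v => cube (length L) v /\ S (proj L ls v))).
Proof.
  intros [_ [Hnd Hc]] D Hi HL. simpl in Hc.
  destruct (nodup_split ls L Hnd HL Hi) as [Hnd2 Hx].
  set (l2 := filter (notin ls) L) in *.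
  pose proof (D_ext _ _ _ _ _ _ _ _ _ D Hnd2) as D2.
  pose proof (D_perm _ _ _ _ _ _ _ _ (map (fun f => idx f (ls ++ l2)) L) L D2
      (perm_idx _ _ Hnd2 HL Hx) (reorder_self _ _ (fun x H => proj2 (Hx x) H))) as D3.
  eapply D_weak; [exact D3| |intros v [Hv _]; exact Hv].
  intros v' [u [[v [w [-> [HS Hw]]]] Hr]]. simpl.
  destruct (Hc v HS) as [Hlv Hfv]. destruct Hw as [Hlw Hfw].
  apply reorder_proj in Hr.
  2:{ intros x H; apply Hx; auto. }
  2:{ rewrite !length_app; lia. }
  subst v'. split.
  - apply cube_proj. apply Forall_app; auto.
  - rewrite proj_proj by auto.
    replace (proj (ls ++ l2) ls (v ++ w)) with (proj ls ls v).
    + rewrite proj_id; auto.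
    + unfold proj. apply map_ext_in. intros f Hf. rewrite idx_app by auto.
      rewrite app_nth1; auto. rewrite Hlv. apply idx_lt; auto.
Qed.

Lemma base_sent (L : list form) : NoDup L -> L <> [] -> der (Sent L (cube (length L))).
Proof.
  intros HL Hne. destruct L as [|x rest]; [congruence|].
  pose proof (D_ext _ _ _ _ _ _ _ _ rest (D_ax A B U fb fu Gamma x) HL) as D.
  eapply D_weak; [exact D| |auto].
  intros u [v [w [-> [[Hv1 Hv2] [Hw1 Hw2]]]]]. split.
  - rewrite length_app, Hv1, Hw1. reflexivity.
  - apply Forall_app; auto.
Qed.

Lemma gather (L : list form) : NoDup L -> L <> [] ->
  (forall s, In s Gamma -> wf_sentence s) -> (forall s, In s Gamma -> incl (sforms _ _ _ s) L) ->
  forall G', incl G' Gamma ->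
  der (Sent L (fun v => cube (length L) v /\ forall s, In s G' -> sset _ _ _ s (proj L (sforms _ _ _ s) v))).
Proof.
  intros HL Hne Hwf Hinc. induction G' as [|s G' IH]; intros Hi.
  - eapply D_weak; [apply base_sent; auto| |tauto]. intros v Hv; split; auto. intros s [].
  - destruct s as [ls S].
    assert (Hs : In (Sent ls S) Gamma) by (apply Hi; left; auto).
    pose proof (extend_sent ls S L (Hwf _ Hs) (D_hyp A B U fb fu Gamma _ Hs) (Hinc _ Hs) HL) as D1.
    pose proof (D_inter _ _ _ _ _ _ _ _ _ (IH (fun x H => Hi x (or_intror H))) D1) as D2.
    eapply D_weak; [exact D2| |tauto].
    intros v [[Hc HG] [_ HS]]. split; auto. intros s [<-|Hs']; auto.
Qed.

Definition closed (L : list form) : Prop :=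
  (forall b f1 f2 w1 w2, In (Bin A B U b f1 f2 w1 w2) L -> In f1 L /\ In f2 L) /\
  (forall u f1 w, In (Un A B U u f1 w) L -> In f1 L).

Lemma model_of (L : list form) v : closed L -> NoDup L -> cube (length L) v ->
  r6w_ok A B U fb fu L v ->
  exists M, is_model A M /\ forall f, In f L -> value A B U fb fu M f = nth (idx f L) v 0.
Proof.
  intros [Cb Cu] HL [Hlen Hunit] [Rb Ru].
  exists (fun a => if excluded_middle_informative (In (Atom A B U a) L)
                   then nth (idx (Atom A B U a) L) v 0 else 0).
  split.
  - intros a. destruct (excluded_middle_informative _). apply nth_unit; auto. unfold unit01; lra.
  - assert (Hnv : forall f, In f L -> nth_error v (idx f L) = Some (nth (idx f L) v 0)).
    { intros f Hf. apply nth_error_nth'. rewrite Hlen. apply idx_lt; auto. }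
    induction f as [a|b f1 IH1 f2 IH2 w1 w2|u f1 IH w]; intros Hf; simpl.
    + destruct (excluded_middle_informative _); tauto.
    + destruct (Cb _ _ _ _ _ Hf) as [H1 H2]. rewrite IH1, IH2 by auto.
      eapply Rb; try apply idx_nth_error; try apply Hnv; auto.
    + pose proof (Cu _ _ _ Hf) as H1. rewrite IH by auto.
      eapply Ru; try apply idx_nth_error; try apply Hnv; auto.
Qed.

Lemma final_step (lg : list form) Sg l2 (X : list R -> Prop) :
  der (Sent (lg ++ l2) X) -> lg <> [] ->
  (forall v', X v' -> length v' = length (lg ++ l2) /\ Sg (firstn (length lg) v')) ->
  (forall v, Sg v -> cube (length lg) v) ->
  der (Sent lg Sg).
Proof.
  intros D Hne HX Hc. destruct l2 as [|h t].
  - rewrite app_nil_r in D. eapply D_weak; [exact D| |auto].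
    intros v' Hv'. destruct (HX v' Hv') as [Hl HS]. rewrite app_nil_r in Hl.
    rewrite <- Hl, firstn_all in HS. auto.
  - pose proof (D_proj _ _ _ _ _ _ _ _ _ D Hne ltac:(discriminate)) as D2.
    eapply D_weak; [exact D2| |auto].
    intros w [u [Hu ->]]. apply HX; auto.
Qed.

Fixpoint subf (f : form) : list form :=
  f :: match f with
       | Atom _ _ _ _ => []
       | Bin _ _ _ _ f1 f2 _ _ => subf f1 ++ subf f2
       | Un _ _ _ _ f1 _ => subf f1
       end.

Lemma subf_trans f f' : In f' (subf f) -> incl (subf f') (subf f).
Proof.
  induction f; simpl; intros [H|H]; subst; try apply incl_refl; try tauto.
  - apply in_app_iff in H as [H|H]; [apply IHf1 in H|apply IHf2 in H];
      intros x Hx; right; apply in_app_iff; auto.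
  - apply IHf in H. intros x Hx; right; auto.
Qed.

Definition decf : forall x y : form, {x = y} + {x <> y} :=
  fun x y => excluded_middle_informative (x = y).

Lemma completeness (g : sentence A B U) :
  (forall s, In s Gamma -> wf_sentence s) -> wf_sentence g ->
  entails fb fu Gamma g -> der g.
Proof.
  intros Hwf Hwg E.
  set (L := nodup decf (flat_map subf (concat (map (@sforms A B U) (g :: Gamma))))).
  assert (HL : NoDup L) by apply NoDup_nodup.
  assert (Hin : forall s f, In s (g :: Gamma) -> In f (sforms _ _ _ s) -> In f L).
  { intros s f Hs Hf. apply nodup_In, in_flat_map. exists f. split; [|destruct f; left; reflexivity].
    apply in_concat. exists (sforms _ _ _ s); split; auto. apply in_map; auto. }
  assert (Hcl : closed L).
  { assert (K : forall f f', In f L -> In f' (subf f) -> In f' L).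
    { intros f f' Hf Hf'. apply nodup_In in Hf. apply nodup_In, in_flat_map.
      apply in_flat_map in Hf as [x [Hx Hfx]]. exists x; split; auto.
      apply (subf_trans _ _ Hfx); auto. }
    assert (Sf : forall f, In f (subf f)) by (destruct f; left; reflexivity).
    split.
    - intros b f1 f2 w1 w2 H. split; apply (K _ _ H); simpl; right; apply in_app_iff; auto.
    - intros u f1 w H. apply (K _ _ H); simpl; right; auto. }
  destruct g as [lg Sg]. destruct Hwg as [Hne [Hndg Hcg]]. simpl in *.
  assert (HLne : L <> []).
  { destruct lg as [|f0]; [congruence|]. intros H. apply (in_nil (a := f0)).
    rewrite <- H. apply (Hin (Sent (f0 :: lg) Sg)); simpl; auto. }
  assert (HincG : forall s, In s Gamma -> incl (sforms _ _ _ s) L).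
  { intros s Hs f Hf. apply (Hin s); simpl; auto. }
  pose proof (D_r6w _ _ _ _ _ _ _ _ (gather L HL HLne Hwf HincG Gamma (incl_refl _))) as D.
  assert (Hig : incl lg L) by (intros f Hf; apply (Hin (Sent lg Sg)); simpl; auto).
  destruct (nodup_split lg L Hndg HL Hig) as [Hnd2 Hx].
  set (l2 := filter (notin lg) L) in *.
  assert (Hx' : forall x, In x L <-> In x (lg ++ l2)) by (intro x; symmetry; apply Hx).
  pose proof (D_perm _ _ _ _ _ _ _ _ (map (fun f => idx f L) (lg ++ l2)) (lg ++ l2) D
      (perm_idx _ _ HL Hnd2 Hx') (reorder_self _ _ (fun x H => proj1 (Hx x) H))) as D3.
  eapply final_step; [exact D3|exact Hne| |exact Hcg].
  intros v' [v [[[Hc HG] Hr6] Hr]]. simpl in Hr6.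
  apply reorder_proj in Hr.
  2:{ intros x H; apply Hx; auto. }
  2:{ apply Hc. }
  subst v'. split; [apply length_proj|].
  unfold proj at 1. rewrite map_app. fold (proj L lg v).
  rewrite <- (length_proj L lg v) at 1. rewrite firstn_app_exact.
  destruct (model_of L v Hcl HL Hc Hr6) as [M [HM HMv]].
  assert (Hsat : forall ls, incl ls L -> map (value A B U fb fu M) ls = proj L ls v).
  { intros ls Hls. unfold proj. apply map_ext_in. intros f Hf. apply HMv; auto. }
  specialize (E M HM). unfold satisfies in E. simpl in E.
  rewrite <- Hsat by auto. apply E.
  intros s Hs. unfold satisfies. rewrite Hsat by auto. apply HG; auto.
Qed.

End Compl.

Theorem theorem5
  (A B U : Type) (HA : Finite A) (HB : Finite B) (HU : Finite U)
  (fb : B -> R -> R -> R -> R -> R) (fu : U -> R -> R -> R)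
  (Hfb : forall b s1 s2 w1 w2, unit01 s1 -> unit01 s2 -> unit01 (fb b s1 s2 w1 w2))
  (Hfu : forall u s w, unit01 s -> unit01 (fu u s w))
  (Gamma : list (sentence A B U)) (g : sentence A B U) :
  (forall s, In s Gamma -> wf_sentence s) -> wf_sentence g ->
  (derives fb fu Gamma g <-> entails fb fu Gamma g).
Proof.
  intros Hwf Hwg. split.
  - apply soundness; auto.
  - apply completeness; auto.
Qed.
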